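(* Let $M$ be a pointed metric space and let $(m_{x_\alpha y_\alpha})_\alpha$ be a net of molecules in $\mathcal F(M)$ which converges weakly to the molecule $m_{xy}$ ($x\neq y$). Then $\lim_\alpha d(x_\alpha,x)=0$ and $\lim_\alpha d(y_\alpha,y)=0$.
   Context: A pointed metric space $M$ has a distinguished origin $0$. $\mathrm{Lip}_0(M)$ is the Banach space of real Lipschitz functions on $M$ vanishing at $0$ with the best Lipschitz constant as norm; $\delta(x)\in\mathrm{Lip}_0(M)^*$ is evaluation at $x$, and $\mathcal F(M)$ is the closed linear span of $\delta(M)$ in $\mathrm{Lip}_0(M)^*$, with $\mathcal F(M)^*=\mathrm{Lip}_0(M)$. For $x\neq y$ in $M$, the molecule is $m_{xy}=(\delta(x)-\delta(y))/d(x,y)$; all $x_\alpha\ne y_\alpha$. *)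

(* Defs.v *)
From Stdlib Require Import Reals.
Open Scope R_scope.

Definition is_metric {T : Type} (d : T -> T -> R) : Prop :=
  (forall x y, 0 <= d x y) /\
  (forall x y, d x y = 0 <-> x = y) /\
  (forall x y, d x y = d y x) /\
  (forall x y z, d x z <= d x y + d y z).

Definition Lip0 {T : Type} (d : T -> T -> R) (o : T) (f : T -> R) : Prop :=
  f o = 0 /\ exists L : R, forall x y, Rabs (f x - f y) <= L * d x y.

Definition directed {I : Type} (le : I -> I -> Prop) : Prop :=
  (exists i : I, True) /\
  (forall i, le i i) /\
  (forall i j k, le i j -> le j k -> le i k) /\
  (forall i j, exists k, le i k /\ le j k).

Definition net_lim {I : Type} (le : I -> I -> Prop) (a : I -> R) (l : R) : Prop :=
  forall eps, 0 < eps -> exists i0, forall i, le i0 i -> Rabs (a i - l) < eps.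

(* the duality pairing <f, m_xy> = (f x - f y) / d(x,y) of f in Lip_0(M)
   with the molecule m_xy in F(M) *)
Definition mol_pair {T : Type} (d : T -> T -> R) (f : T -> R) (x y : T) : R :=
  (f x - f y) / d x y.

(* the net of molecules (m_{xa i, ya i})_i converges weakly in F(M) to m_xy,
   i.e. <f, m_{xa i ya i}> -> <f, m_xy> for every f in F(M)^* = Lip_0(M) *)
Definition weak_conv_molecules {T I : Type} (d : T -> T -> R) (o : T)
  (le : I -> I -> Prop) (xa ya : I -> T) (x y : T) : Prop :=
  forall f : T -> R, Lip0 d o f ->
    net_lim le (fun i => mol_pair d f (xa i) (ya i)) (mol_pair d f x y).

(* Main.v *)
Require Import Defs.
From Stdlib Require Import Reals Lra.
Open Scope R_scope.

Lemma rmax_case (a : R) : (0 <= a /\ Rmax 0 a = a) \/ (a <= 0 /\ Rmax 0 a = 0).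
Proof. unfold Rmax; destruct (Rle_dec 0 a); [left|right]; lra. Qed.

Lemma bump_lip (T : Type) (d : T -> T -> R) (o c : T) (dl : R) (hd : is_metric d) :
  Lip0 d o (fun z => Rmax 0 (dl - d z c) - Rmax 0 (dl - d o c)).
Proof.
  destruct hd as [h0 [h1 [h2 h3]]]. split.
  - ring.
  - exists 1. intros a b.
    pose proof (h3 a b c). pose proof (h3 b a c). pose proof (h2 a b).
    destruct (rmax_case (dl - d a c)) as [[? E1]|[? E1]];
    destruct (rmax_case (dl - d b c)) as [[? E2]|[? E2]];
    rewrite E1, E2; apply Rabs_le; lra.
Qed.

Lemma div_pos_num a b : 0 < b -> 0 < a / b -> 0 < a.
Proof. intros hb h. replace a with ((a/b)*b) by (field; lra). nra. Qed.

Lemma div_neg_num a b : 0 < b -> a / b < 0 -> a < 0.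
Proof. intros hb h. replace a with ((a/b)*b) by (field; lra). nra. Qed.

Lemma pos_div a b : 0 < b -> 0 < a -> 0 < a / b.
Proof. intros. unfold Rdiv. apply Rmult_lt_0_compat; auto. apply Rinv_0_lt_compat; auto. Qed.

Lemma neg_div a b : 0 < b -> a < 0 -> a / b < 0.
Proof. intros hb ha. assert (0 < (-a)/b) by (apply pos_div; lra).
  replace (a/b) with (-((-a)/b)) by (field; lra). lra. Qed.

Theorem lemma2p2 (T : Type) (d : T -> T -> R) (o : T) (hd : is_metric d)
  (I : Type) (le : I -> I -> Prop) (hI : directed le)
  (xa ya : I -> T) (x y : T)
  (hxy : x <> y) (hne : forall i, xa i <> ya i)
  (hw : weak_conv_molecules d o le xa ya x y) :
  net_lim le (fun i => d (xa i) x) 0 /\ net_lim le (fun i => d (ya i) y) 0.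
Proof.
  pose proof hd as [h0 [h1 [h2 h3]]].
  assert (hr : 0 < d x y).
  { destruct (h0 x y) as [|E]; auto. exfalso; apply hxy, h1; auto. }
  assert (hdi : forall i, 0 < d (xa i) (ya i)).
  { intro i. destruct (h0 (xa i) (ya i)) as [|E]; auto. exfalso; apply (hne i), h1; auto. }
  assert (hxx : d x x = 0) by (apply h1; auto).
  assert (hyy : d y y = 0) by (apply h1; auto).
  split; intros eps heps; set (dl := Rmin eps (d x y));
  assert (hdl : 0 < dl) by (unfold dl; apply Rmin_pos; lra);
  assert (hdl1 : dl <= eps) by apply Rmin_l;
  assert (hdl2 : dl <= d x y) by apply Rmin_r.
  - set (c := x).
    specialize (hw _ (bump_lip _ d o c dl hd)).
    unfold mol_pair in hw.
    set (p := (Rmax 0 (dl - d x c) - Rmax 0 (dl - d o c) -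
               (Rmax 0 (dl - d y c) - Rmax 0 (dl - d o c))) / d x y) in hw.
    assert (hp : 0 < p).
    { unfold p, c. apply pos_div; auto. rewrite (h2 y x).
      destruct (rmax_case (dl - d x x)) as [[? E1]|[? E1]];
      destruct (rmax_case (dl - d x y)) as [[? E2]|[? E2]];
      rewrite ?E1, ?E2; lra. }
    destruct (hw p hp) as [i0 Hi0]. exists i0. intros i hi.
    specialize (Hi0 i hi). apply Rabs_def2 in Hi0. destruct Hi0 as [Ha Hb]. cbv beta in Ha, Hb.
    assert (Hn : 0 < Rmax 0 (dl - d (xa i) c) - Rmax 0 (dl - d o c) -
   (Rmax 0 (dl - d (ya i) c) - Rmax 0 (dl - d o c))).
    { apply (div_pos_num _ (d (xa i) (ya i))); [apply hdi|lra]. }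
    pose proof (h0 (xa i) x).
    unfold c in *. rewrite Rminus_0_r, Rabs_right by lra.
    destruct (rmax_case (dl - d (xa i) x)) as [[? E1]|[? E1]];
    destruct (rmax_case (dl - d (ya i) x)) as [[? E2]|[? E2]];
    rewrite ?E1, ?E2 in Hn; lra.
  - set (c := y).
    specialize (hw _ (bump_lip _ d o c dl hd)).
    unfold mol_pair in hw.
    set (p := (Rmax 0 (dl - d x c) - Rmax 0 (dl - d o c) -
               (Rmax 0 (dl - d y c) - Rmax 0 (dl - d o c))) / d x y) in hw.
    assert (hp : 0 < - p).
    { assert (p < 0); [|lra].
      unfold p, c. apply neg_div; auto.
      destruct (rmax_case (dl - d y y)) as [[? E1]|[? E1]];
      destruct (rmax_case (dl - d x y)) as [[? E2]|[? E2]];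
      rewrite ?E1, ?E2; lra. }
    destruct (hw (-p) hp) as [i0 Hi0]. exists i0. intros i hi.
    specialize (Hi0 i hi). apply Rabs_def2 in Hi0. destruct Hi0 as [Ha Hb]. cbv beta in Ha, Hb.
    assert (Hn : Rmax 0 (dl - d (xa i) c) - Rmax 0 (dl - d o c) -
   (Rmax 0 (dl - d (ya i) c) - Rmax 0 (dl - d o c)) < 0).
    { apply (div_neg_num _ (d (xa i) (ya i))); [apply hdi|lra]. }
    pose proof (h0 (ya i) y).
    unfold c in *. rewrite Rminus_0_r, Rabs_right by lra.
    destruct (rmax_case (dl - d (xa i) y)) as [[? E1]|[? E1]];
    destruct (rmax_case (dl - d (ya i) y)) as [[? E2]|[? E2]];
    rewrite ?E1, ?E2 in Hn; lra.
Qed.
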